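(* Let $G$ be a connected graph, let $\sigma$ be a BFS ordering of $G$ with $\mathcal{F}$-tree $T_\sigma$, and let $S$ be the set of the first $k$ internal vertices of $T_\sigma$ (with respect to the order $\sigma$). Let $\rho'$ be the ordering of $S$ induced by $\sigma$, let $\rho$ be any ordering of $V(G)$ that starts with $\rho'$, let $\tau$ be the $\mathrm{BFS}^+_\rho$ ordering of $G$, and let $T_\tau$ be the $\mathcal{F}$-tree of $\tau$. Then every $v\in S$ has the same set of children in $T_\sigma$ as in $T_\tau$.
   Context: All graphs are finite, simple, undirected, connected and non-empty. A BFS ordering is produced by breadth-first search with a queue: choose a start vertex, mark it visited and enqueue it; repeatedly dequeue the front vertex $v$ and enqueue all unvisited neighbors of $v$ in some order, marking them visited; the ordering is the visiting order. Given a linear ordering $\rho$ of $V(G)$, the $\mathrm{BFS}^+_\rho$ ordering is the BFS ordering in which every tie is broken by $\rho$: the start vertex is the first vertex of $\rho$, and whenever the unvisited neighbors of a dequeued vertex are enqueued, they are enqueued in the order in which they appear in $\rho$. The $\mathcal{F}$-tree of an ordering $(v_1,\dots,v_n)$ is the spanning tree rooted at $v_1$ in which the parent of $v_i$ ($i>1$) is its leftmost neighbor in the ordering. A leaf is a non-root vertex without children; all other vertices, including the root, are internal. *)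

(* Defs.v *)
(* A simple graph on a finite vertex type T is a symmetric,
   irreflexive boolean relation e : rel T. *)
From mathcomp Require Import all_boot.
Set Implicit Arguments. Unset Strict Implicit. Unset Printing Implicit Defensive.

Section BFS.
Variables (T : finType) (e : rel T).

Definition is_ordering (s : seq T) : Prop := uniq s /\ forall x : T, x \in s.

(* A state is (visited, queue); [visited] lists the
   visited vertices in visiting order.  A step dequeues the front vertex v and
   enqueues the list l of its unvisited neighbours, in an order allowed by the
   policy P v visited l, marking them visited. [bfs_run P s q out] : starting
   from visited s and queue q, the search terminates with visiting order out. *)
Inductive bfs_run (P : T -> seq T -> seq T -> Prop) :
    seq T -> seq T -> seq T -> Prop :=
| bfs_done s : bfs_run P s [::] s
| bfs_step v q s l out :
    P v s l -> bfs_run P (s ++ l) (q ++ l) out -> bfs_run P s (v :: q) out.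

Definition free_policy (v : T) (s l : seq T) : Prop :=
  uniq l /\ l =i [pred u | e v u && (u \notin s)].

(* BFS^+_rho: ties broken by rho. *)
Definition plus_policy (rho : seq T) (v : T) (s l : seq T) : Prop :=
  l = [seq u <- rho | e v u && (u \notin s)].

Definition is_bfs_ordering (sigma : seq T) : Prop :=
  exists x : T, bfs_run free_policy [:: x] [:: x] sigma.

Definition is_bfsplus (rho tau : seq T) : Prop :=
  exists (x : T) (rest : seq T),
    rho = x :: rest /\ bfs_run (plus_policy rho) [:: x] [:: x] tau.

(* F-tree of an ordering sigma = (v1,...,vn): rooted at v1; the parent of
   v_i (i > 1) is its leftmost neighbour in the ordering. *)
Definition froot (sigma : seq T) : option T := ohead sigma.

Definition fparent (sigma : seq T) (v : T) : option T :=
  if froot sigma == Some v then None else ohead [seq u <- sigma | e v u].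

Definition fchildren (sigma : seq T) (u : T) : {set T} :=
  [set v | (v \in sigma) && (fparent sigma v == Some u)].

Definition finternal (sigma : seq T) (u : T) : bool :=
  (froot sigma == Some u) || (fchildren sigma u != set0).

Definition first_internal (sigma : seq T) (k : nat) : seq T :=
  take k [seq u <- sigma | finternal sigma u].

End BFS.

(* Main.v *)
Require Import Defs.
From mathcomp Require Import all_boot.
Set Implicit Arguments. Unset Strict Implicit. Unset Printing Implicit Defensive.

Lemma ohead_filter_first (T : eqType) (p : pred T) (s : seq T) u w :
  ohead (filter p s) = Some u -> p w -> w \in s -> index u s <= index w s.
Proof.
elim: s => [|c s IH] //=.
case pc: (p c) => /=.
  by move=> [<-]; rewrite eqxx.
move=> Hu pw; rewrite in_cons => /orP[/eqP Ew|ws].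
  by rewrite -Ew pw in pc.
have uc : (c == u) = false.
  apply/negbTE/eqP=> Ecu; move: Hu; subst c.
  case E: (filter p s) => [|a t] //= [Eau].
  have : a \in filter p s by rewrite E mem_head.
  by rewrite mem_filter Eau pc.
have wc : (c == w) = false by apply/negbTE/eqP=> E; rewrite E pw in pc.
by rewrite uc wc ltnS; apply: IH.
Qed.

Lemma ohead_filter_mem (T : eqType) (p : pred T) (s : seq T) u :
  ohead (filter p s) = Some u -> p u && (u \in s).
Proof.
case E: (filter p s) => [|a t] //= [<-].
by rewrite -mem_filter E mem_head.
Qed.

Lemma ohead_filter_has (T : eqType) (p : pred T) (s : seq T) w :
  p w -> w \in s -> exists u, ohead (filter p s) = Some u.
Proof.
move=> pw ws; case E: (filter p s) => [|a t] /=; last by exists a.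
have : w \in filter p s by rewrite mem_filter pw ws.
by rewrite E.
Qed.

Section Gen.
Variables (T : finType) (e : rel T).
Hypothesis e_sym : symmetric e.
Variable x : T.

Definition Mono (s : seq T) : Prop :=
  forall a b pa pb, a \in s -> b \in s -> fparent e s a = Some pa ->
    fparent e s b = Some pb -> index pa s < index pb s -> index a s < index b s.

Definition Ginv (s q : seq T) : Prop :=
  [/\ uniq s, ohead s = Some x,
      exists2 d, s = d ++ q &
        (forall w, w \in d -> forall n, e w n -> n \in s) /\
        (forall b, b \in s -> b != x -> exists2 w, w \in d &
            fparent e s b = Some w /\ index w s < index b s)
    & Mono s].

Definition lspec (v : T) (s l : seq T) := uniq l /\ forall n, (n \in l) = e v n && (n \notin s).

Lemma fparent_x s : ohead s = Some x -> fparent e s x = None.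
Proof. by rewrite /fparent /Defs.froot => ->; rewrite eqxx. Qed.

Lemma fparent_some s b w : fparent e s b = Some w -> [/\ e b w, w \in s & Defs.froot s != Some b].
Proof.
rewrite /fparent; case: ifP => // H /ohead_filter_mem /andP[A B].
by split => //; apply/negbT.
Qed.

Lemma ohead_cat (s r : seq T) : s != [::] -> ohead (s ++ r) = ohead s.
Proof. by case: s. Qed.

Lemma fparent_catl s r b w : s != [::] -> fparent e s b = Some w -> fparent e (s ++ r) b = Some w.
Proof.
move=> sn; rewrite /fparent /Defs.froot ohead_cat //.
case: ifP => // _.
rewrite filter_cat.
by case E: (filter (e b) s) => [|a t].
Qed.

Lemma step_parent d v q l b :
  (forall w, w \in d -> forall n, e w n -> n \in d ++ v :: q) ->
  ohead (d ++ v :: q) = Some x ->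
  lspec v (d ++ v :: q) l -> b \in l ->
  fparent e ((d ++ v :: q) ++ l) b = Some v.
Proof.
move=> Hd Hh [_ Hl] bl.
move: (bl); rewrite Hl => /andP[evb bns].
have xin : x \in d ++ v :: q.
  by case: (d) Hh => [|c t] /= [->]; rewrite mem_head.
have bx : b != x by apply/eqP=> E; move: bns; rewrite E xin.
rewrite /fparent /Defs.froot.
have -> : ohead ((d ++ v :: q) ++ l) = Some x.
  by move: Hh; case: (d) => [|c t].
have -> : (Some x == Some b) = false.
  by apply/negbTE; apply: contra bx => /eqP [->].
rewrite -catA filter_cat.
have -> : filter (e b) d = [::].
  rewrite (@eq_in_filter _ _ pred0) ?filter_pred0 // => w wd /=.
  apply/negbTE/negP=> ebw; move: bns.
  by rewrite (Hd w wd b) // e_sym.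
by rewrite /= e_sym evb.
Qed.


Lemma Ginv_step s v q l : Ginv s (v :: q) -> lspec v s l -> Ginv (s ++ l) (q ++ l).
Proof.
move=> [us hs [d Es [Hd Hb]] Hm] Hl.
have Hl' := Hl; case: Hl' => ul Hml.
have sn : s != [::] by rewrite Es; case: (d).
have lns : forall n, n \in l -> n \notin s by move=> n; rewrite Hml => /andP[].
have vs : v \in s by rewrite Es mem_cat mem_head orbT.
have xs : x \in s by case: (s) hs => [|c t] //= [->]; rewrite mem_head.
have idx_d : forall w, w \in d -> index w s < size d.
  by move=> w wd; rewrite Es index_cat wd index_mem.
have idx_v : index v s = size d.
  move: us; rewrite Es cat_uniq => /and3P[_ /hasPn Hdq _].
  rewrite index_cat; case: ifP => [vd|_]; last by rewrite /= eqxx addn0.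
  by have := Hdq v (mem_head _ _); rewrite vd.
have idx_s : forall y, y \in s -> index y (s ++ l) = index y s.
  by move=> y ys; rewrite index_cat ys.
have par_s : forall b, b \in s -> b != x -> exists2 w, w \in d &
      fparent e (s ++ l) b = Some w /\ fparent e s b = Some w /\ index w s < index b s.
  move=> b bs bx; have [w wd [Hw Hi]] := Hb b bs bx.
  by exists w => //; split => //; apply: fparent_catl.
have par_l : forall b, b \in l -> fparent e (s ++ l) b = Some v.
  move=> b bl; rewrite Es; apply: step_parent => //.
    by rewrite -Es.
  by rewrite -Es.
  by rewrite -Es.
have px : fparent e (s ++ l) x = None by apply: fparent_x; rewrite ohead_cat.
split.
- rewrite cat_uniq us ul andbT /=; apply/hasPn => n nl /=; exact: lns.
- by rewrite ohead_cat.
- exists (rcons d v); first by rewrite Es cat_rcons -catA.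
  split.
    move=> w; rewrite mem_rcons in_cons => /orP[/eqP->|wd] n ewn.
      by rewrite mem_cat; case: (boolP (n \in s)) => //= ns; rewrite Hml ewn.
    by rewrite mem_cat (Hd w wd n ewn).
  move=> b; rewrite mem_cat => /orP[bs|bl] bx.
    have [w wd [H1 [_ H3]]] := par_s b bs bx.
    exists w; first by rewrite mem_rcons in_cons wd orbT.
    split => //; rewrite !idx_s //; rewrite Es mem_cat wd //.
  exists v; first by rewrite mem_rcons mem_head.
  split; first exact: par_l.
  rewrite index_cat vs index_cat (negbTE (lns b bl)).
  by have := vs; rewrite -index_mem => H; apply: (leq_trans H); apply: leq_addr.
- move=> a b pa pb; rewrite !mem_cat => /orP[as_|al] /orP[bs|bl] Ha Hb'.
  + have ax : a != x by apply/eqP => E; move: Ha; rewrite E px.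
    have bx : b != x by apply/eqP => E; move: Hb'; rewrite E px.
    have [wa wad [Ha1 [Ha2 _]]] := par_s a as_ ax.
    have [wb wbd [Hb1 [Hb2 _]]] := par_s b bs bx.
    move: Ha Hb'; rewrite Ha1 Hb1 => -[<-] [<-].
    have was : wa \in s by rewrite Es mem_cat wad.
    have wbs : wb \in s by rewrite Es mem_cat wbd.
    rewrite !idx_s // => H; exact: (Hm a b wa wb).
  + move=> _; rewrite index_cat as_ index_cat (negbTE (lns b bl)).
    by have := as_; rewrite -index_mem => H; apply: (leq_trans H); apply: leq_addr.
  + have bx : b != x by apply/eqP => E; move: Hb'; rewrite E px.
    have [wb wbd [Hb1 _]] := par_s b bs bx.
    move: Ha Hb'; rewrite (par_l a al) Hb1 => -[<-] [<-].
    have wbs : wb \in s by rewrite Es mem_cat wbd.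
    rewrite (idx_s v vs) (idx_s wb wbs) idx_v => H.
    by have := idx_d wb wbd; rewrite ltnNge (ltnW H).
  + move: Ha Hb'; rewrite (par_l a al) (par_l b bl) => -[<-] [<-].
    by rewrite ltnn.
Qed.

Lemma Ginv_init : Ginv [:: x] [:: x].
Proof.
split => //.
- by exists [::] => //; split => // b; rewrite inE => /eqP->; rewrite eqxx.
- move=> a b pa pb; rewrite inE => /eqP -> _.
  by rewrite fparent_x.
Qed.

Variable P : T -> seq T -> seq T -> Prop.
Hypothesis Pspec : forall v s l, P v s l -> lspec v s l.

Lemma run_prefix s q out : bfs_run P s q out -> exists r, out = s ++ r.
Proof.
elim=> [s0|v q0 s0 l out0 _ _ [r ->]]; first by exists [::]; rewrite cats0.
by exists (l ++ r); rewrite catA.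
Qed.

Lemma run_Ginv s q out : bfs_run P s q out -> Ginv s q -> Ginv out [::].
Proof.
elim=> // v q0 s0 l out0 HP _ IH HG.
by apply: IH; apply: Ginv_step HG (Pspec HP).
Qed.

Lemma step_children s v q l out :
  Ginv s (v :: q) -> lspec v s l -> bfs_run P (s ++ l) (q ++ l) out ->
  fchildren e out v = [set n | n \in l].
Proof.
move=> HG Hl Hrun.
have [r Eout] := run_prefix Hrun.
case: (HG) => us hs [d Es [Hd Hb]] _.
case: (Hl) => ul Hml.
have sn : s != [::] by rewrite Es; case: (d).
have xs : x \in s by case: (s) hs => [|c t] //= [->]; rewrite mem_head.
apply/setP => n; rewrite !inE.
case: (boolP (n \in l)) => nl.
  have -> : n \in out by rewrite Eout mem_cat mem_cat nl orbT.
  have Hsl : fparent e (s ++ l) n = Some v.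
    by move: Hd hs Hl nl; rewrite Es => Hd' hs' Hl' nl'; apply: step_parent.
  rewrite Eout (fparent_catl _ _ Hsl) ?eqxx //.
  by case: (s) sn.
apply/negbTE/negP => /andP[nout /eqP Hp].
have nx : n != x.
  apply/eqP => E; move: Hp; rewrite E fparent_x //.
  by rewrite Eout -catA ohead_cat.
case: (boolP (n \in s)) => ns.
  have [w wd [Hw _]] := Hb n ns nx.
  move: Hp; rewrite Eout -catA (fparent_catl _ sn Hw) => -[Ewv].
  move: us; rewrite Es cat_uniq => /and3P[_ /hasPn H _].
  by have := H v (mem_head _ _); rewrite /= -Ewv wd.
have [env _ _] := fparent_some Hp.
by move: nl; rewrite Hml e_sym env ns.
Qed.

End Gen.


Section Main.
Variables (T : finType) (e : rel T).
Hypothesis e_sym : symmetric e.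
Variables (sigma : seq T) (x : T).
Hypotheses (us : uniq sigma) (hs : ohead sigma = Some x)
  (allin : forall n, n \in sigma) (Mono_s : Mono e sigma)
  (F3 : forall b, b != x -> exists2 w, w \in sigma &
            fparent e sigma b = Some w /\ index w sigma < index b sigma).

Definition pos u := index u sigma.
Definition U p n := (n == x) || (if fparent e sigma n is Some u then pos u < p else false).

Lemma pos_inj u w : pos u = pos w -> u = w.
Proof. exact: index_inj. Qed.

Lemma pos_x : pos x = 0.
Proof. by rewrite /pos; case: (sigma) hs => [|c t] //= [->]; rewrite eqxx. Qed.

Lemma par_x : fparent e sigma x = None.
Proof. exact: fparent_x. Qed.

Lemma par_ohead n u : fparent e sigma n = Some u -> ohead (filter (e n) sigma) = Some u.
Proof. by rewrite /fparent; case: ifP. Qed.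

Lemma par_first n u w : fparent e sigma n = Some u -> e n w -> pos u <= pos w.
Proof. by move=> /par_ohead H enw; apply: (ohead_filter_first H enw). Qed.

Lemma par_exists n w : n != x -> e n w -> exists u, fparent e sigma n = Some u.
Proof.
move=> nx enw; rewrite /fparent /Defs.froot hs.
have -> : (Some x == Some n) = false by apply/negbTE; apply: contra nx => /eqP [->].
exact: (ohead_filter_has enw).
Qed.

Lemma par_edge n u : fparent e sigma n = Some u -> e n u.
Proof. by case/fparent_some. Qed.

Lemma par_nx n u : fparent e sigma n = Some u -> n != x.
Proof. by move=> H; apply/eqP => E; move: H; rewrite E par_x. Qed.

Lemma U_pos p y : pos y <= p -> U p y.
Proof.
move=> Hy; rewrite /U; case: (eqVneq y x) => //= yx.
have [w _ [-> Hw]] := F3 yx.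
exact: leq_trans Hw Hy.
Qed.

Lemma U_mono p p' n : p <= p' -> U p n -> U p' n.
Proof.
move=> Hp; rewrite /U => /orP[->//|]; case: (fparent e sigma n) => // u H.
by rewrite (leq_trans H Hp) orbT.
Qed.

Lemma U_x p : U p x.
Proof. by rewrite /U eqxx. Qed.

Lemma key z n : (e z n && ~~ U (pos z) n) = (fparent e sigma n == Some z).
Proof.
apply/idP/idP.
  move=> /andP[ezn]; rewrite /U negb_or => /andP[nx].
  rewrite e_sym in ezn.
  have [u Hu] := par_exists nx ezn.
  rewrite Hu -leqNgt => H.
  have := par_first Hu ezn => H'.
  by rewrite (@pos_inj u z) //; apply/eqP; rewrite eqn_leq H H'.
move=> /eqP H; rewrite e_sym (par_edge H) /U negb_or (par_nx H) H /= ltnn.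
done.
Qed.

Lemma fch_sigma z : fchildren e sigma z = [set n | fparent e sigma n == Some z].
Proof. by apply/setP => n; rewrite !inE allin. Qed.

Lemma noint u : ~~ finternal e sigma u -> u != x /\ forall n, fparent e sigma n != Some u.
Proof.
rewrite /finternal negb_or /Defs.froot hs => /andP[Hx]; rewrite negbK => /eqP H0; split.
  by apply: contra Hx => /eqP ->.
move=> n; apply/negP => /eqP Hn.
have : n \in fchildren e sigma u by rewrite inE allin Hn eqxx.
by rewrite H0 inE.
Qed.

Lemma U_succ z n : U (pos z).+1 n = U (pos z) n || (fparent e sigma n == Some z).
Proof.
rewrite /U; case: (fparent e sigma n) => [u|]; last by rewrite !orbF.
rewrite ltnS leq_eqVlt -orbA; congr (_ || _).
rewrite orbC; congr (_ || _).
apply/eqP/eqP => [/pos_inj ->//|[->]//].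
Qed.


Variable S : seq T.
Hypothesis K : forall u z, z \in S -> finternal e sigma u -> pos u <= pos z -> u \in S.
Variable rho : seq T.
Hypothesis rho_all : forall n, n \in rho.

Definition R a b := (b \in S) ==> (pos a < pos b).
Hypothesis HR : pairwise R rho.

Definition Inv p (s q : seq T) :=
  [/\ forall n, (n \in s) = U p n, forall y, y \in S -> pos y < p -> y \notin q,
      pairwise R q & forall y, y \in S -> p <= pos y -> y \in s -> y \in q].

Hypothesis rho_uniq : uniq rho.

Lemma plus_spec v s l : plus_policy e rho v s l -> lspec e v s l.
Proof.
move=> ->; split; first exact: filter_uniq.
by move=> n; rewrite mem_filter rho_all andbT.
Qed.

Lemma get_z p y : y \in S -> p <= pos y ->
  exists z, [/\ z \in S, p <= pos z & forall y', y' \in S -> p <= pos y' -> pos z <= pos y'].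
Proof.
move=> Sy py.
pose Pz := [pred z | (z \in S) && (p <= pos z)].
have Py : Pz y by rewrite /Pz inE Sy py.
case: (@arg_minnP _ y Pz pos Py) => z /andP[Sz pz] Hmin.
exists z; split => // y' Sy' py'; apply: Hmin; by rewrite inE Sy' py'.
Qed.

Lemma phase_facts p s q z : Inv p s q -> z \in S -> p <= pos z ->
  (forall y, y \in S -> p <= pos y -> pos z <= pos y) ->
  [/\ (forall u, p <= pos u -> pos u < pos z -> ~~ finternal e sigma u),
      (forall n, U p n = U (pos z) n) & z \in q].
Proof.
move=> [I1 I3 I4 I5] Sz pz zmin.
have A : forall u, p <= pos u -> pos u < pos z -> ~~ finternal e sigma u.
  move=> u pu uz; apply/negP => ui.
  have Su := K Sz ui (ltnW uz).
  by have := zmin u Su pu; rewrite leqNgt uz.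
have B : forall n, U p n = U (pos z) n.
  move=> n; apply/idP/idP; first exact: U_mono.
  rewrite /U => /orP[->//|]; case Hn: (fparent e sigma n) => [u|//] uz.
  case: (ltnP (pos u) p) => pu; first by rewrite orbT.
  have [_ H] := noint (A u pu uz).
  by have := H n; rewrite Hn eqxx.
split => //; apply: I5 => //.
by rewrite I1 B; apply: U_pos.
Qed.

Lemma sim s q out : bfs_run (plus_policy e rho) s q out -> Ginv e x s q ->
  forall p, Inv p s q -> forall y, y \in S -> p <= pos y ->
    fchildren e sigma y = fchildren e out y.
Proof.
elim=> [s0 | w q0 s0 l out0 HP Hrun IH] HG p HI y Sy py;
  have [z [Sz pz zmin]] := get_z Sy py;
  have [A B C] := phase_facts HI Sz pz zmin.
  by [].
case: HI => I1 I3 I4 I5.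
have Hl := plus_spec HP.
case: (Hl) => ul Hml.
case: (HG) => uS _ [d Es _] _.
have q0s : forall a, a \in q0 -> a \in s0.
  by move=> a aq; rewrite Es mem_cat in_cons aq !orbT.
case: (eqVneq w z) => [Ewz|wz].
  subst w.
  have HGs := Ginv_step e_sym HG Hl.
  have Hch := step_children e_sym HG Hl Hrun.
  have Hsz : fchildren e sigma z = fchildren e out0 z.
    rewrite Hch fch_sigma; apply/setP=> n; rewrite !inE Hml -key I1 B //.
  case: (leqP (pos y) (pos z)) => hyz.
    have -> : y = z by apply: pos_inj; apply/eqP; rewrite eqn_leq hyz zmin.
    exact: Hsz.
  apply: (IH HGs (pos z).+1) => //.
  have zq0 : z \notin q0.
    by move: uS; rewrite Es cat_uniq => /and3P[_ _ /andP[]].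
  split.
  - by move=> n; rewrite mem_cat Hml I1 B U_succ -key.
  - move=> y' Sy' py'; rewrite mem_cat negb_or; apply/andP; split.
      case: (ltnP (pos y') p) => hp.
        by have := I3 y' Sy' hp; rewrite in_cons negb_or => /andP[].
      have -> : y' = z.
        by apply: pos_inj; apply/eqP; rewrite eqn_leq -ltnS py' zmin.
      exact: zq0.
    rewrite Hml I1 B U_pos ?andbF //.
  - rewrite pairwise_cat; move: I4; rewrite pairwise_cons => /andP[_ ->].
    have Pl : pairwise R l by rewrite HP; apply: pairwise_filter.
    apply/andP; split; last exact: Pl.
    apply/allrelP => a b aq bl; rewrite /R; apply/implyP => _.
    have Ua : U (pos z) a by rewrite -B -I1 q0s.
    have Hb : fparent e sigma b == Some z by rewrite -key -B -I1 -Hml.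
    have bns : b \notin s0 by move: bl; rewrite Hml => /andP[].
    move: Ua; rewrite /U => /orP[/eqP ->|].
      rewrite pos_x lt0n; apply/negP => /eqP H0.
      have bx : b = x by apply: pos_inj; rewrite H0 pos_x.
      by move: bns; rewrite bx I1 U_x.
    case Ha: (fparent e sigma a) => [u|//] uz.
    exact: (Mono_s (allin a) (allin b) Ha (eqP Hb) uz).
  - move=> y' Sy' py'; rewrite !mem_cat => /orP[ys|->]; last by rewrite orbT.
    have := I5 y' Sy' (leq_trans pz (ltnW py')) ys; rewrite in_cons => /orP[/eqP E|->//].
    by move: py'; rewrite E ltnn.
have zq : z \in q0 by move: C; rewrite in_cons eq_sym (negbTE wz).
have pwz : pos w < pos z.
  by move: I4; rewrite pairwise_cons => /andP[/allP H _]; have := H z zq; rewrite /R Sz.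
have wS : w \notin S.
  apply/negP => Sw; case: (ltnP (pos w) p) => h.
    by have := I3 w Sw h; rewrite mem_head.
  by have := zmin w Sw h; rewrite leqNgt pwz.
have wni : ~~ finternal e sigma w.
  by apply/negP => wi; have := K Sz wi (ltnW pwz); rewrite (negbTE wS).
have [wx wch] := noint wni.
have Nw : forall n, e w n -> n \in s0.
  move=> n ewn; rewrite I1 B; case: (eqVneq n x) => [->|nx]; first exact: U_x.
  rewrite e_sym in ewn.
  have [u Hu] := par_exists nx ewn.
  have H1 := par_first Hu ewn.
  have uw : u != w by apply: contraNneq (wch n) => <-; rewrite Hu.
  have H2 : pos u < pos w.
    rewrite ltn_neqAle H1 andbT; apply: contra uw => /eqP H; apply/eqP; exact: pos_inj.
  by rewrite /U Hu (ltn_trans H2 pwz) orbT.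
have l0 : l = [::].
  rewrite HP (@eq_in_filter _ _ pred0) ?filter_pred0 // => n _ /=.
  apply/negbTE; rewrite negb_and; case: (boolP (e w n)) => //= ewn.
  by rewrite Nw.
move: IH; rewrite l0 !cats0 => IH.
apply: (IH _ p) => //.
  by have := Ginv_step e_sym HG Hl; rewrite l0 !cats0.
split => //.
- move=> y' Sy' h; have := I3 y' Sy' h; rewrite in_cons negb_or => /andP[] //.
- by move: I4; rewrite pairwise_cons => /andP[].
- move=> y' Sy' h ys; have := I5 y' Sy' h ys; rewrite in_cons => /orP[/eqP E|//].
  by move: wS; rewrite -E Sy'.
Qed.

End Main.

Lemma filter_index_mono (T : eqType) (p : pred T) (s : seq T) a b :
  a \in s -> b \in s -> p a -> p b -> index a s <= index b s ->
  index a (filter p s) <= index b (filter p s).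
Proof.
elim: s => [|c s IH] //=.
rewrite !in_cons => /orP[/eqP Ea|as_] /orP[/eqP Eb|bs] pa pb.
- by subst; rewrite pa /= eqxx.
- by subst; rewrite pa /= eqxx.
- by subst; rewrite pb /= eqxx; case: eqP.
case: (eqVneq c a) => [Eca|nca].
  by subst; rewrite pa /= eqxx.
case: (eqVneq c b) => [Ecb|ncb] //=.
rewrite ltnS => H.
case: (p c) => /=; last exact: IH.
by rewrite (negbTE nca) (negbTE ncb) ltnS; apply: IH.
Qed.

Lemma closed_path (T : eqType) (e : rel T) (s : seq T) a p :
  (forall w, w \in s -> forall n, e w n -> n \in s) -> a \in s -> path e a p -> last a p \in s.
Proof.
move=> Hc; elim: p a => [|c p IH] a //= ain /andP[eac Hp].
by apply: IH => //; apply: Hc eac.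
Qed.

Lemma pairwise_index (T : eqType) (s : seq T) :
  uniq s -> pairwise (fun a b => index a s < index b s) s.
Proof.
case: s => [|x0 t] // us; apply/(pairwiseP x0) => i j hi hj hij.
by rewrite !index_uniq.
Qed.

Theorem lemma4p6 (T : finType) (e : rel T)
    (e_sym : symmetric e) (e_irr : irreflexive e)
    (e_conn : forall x y : T, connect e x y)
    (sigma : seq T) (Hsigma : is_bfs_ordering e sigma)
    (k : nat) (rho tau : seq T)
    (Hrho : is_ordering rho)
    (Hpre : prefix (first_internal e sigma k) rho)
    (Htau : is_bfsplus e rho tau) :
  forall v : T, v \in first_internal e sigma k ->
    fchildren e sigma v = fchildren e tau v.
Proof.
move=> v Hv.
case: Hsigma => x0 Hrun.
have free_spec : forall w s l, free_policy e w s l -> lspec e w s l.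
  by move=> w s l [ul Hl]; split => // n; rewrite Hl inE.
have [us hs [d Es [Hd Hb]] Mono_s] := run_Ginv e_sym free_spec Hrun (Ginv_init e x0).
rewrite cats0 in Es; subst d.
have allin : forall n, n \in sigma.
  move=> n; have /connectP [p Hp ->] := e_conn x0 n.
  apply: closed_path Hd _ Hp.
  by case: (sigma) hs => [|c t] //= [->]; rewrite mem_head.
set S := first_internal e sigma k in Hv Hpre.
case: Hrho => rho_uniq rho_all.
have [r Er] := prefixP Hpre.
have K : forall u z, z \in S -> finternal e sigma u -> pos sigma u <= pos sigma z -> u \in S.
  move=> u z Sz ui uz.
  rewrite /S /first_internal in Sz *.
  have zf := mem_take Sz.
  have uf : u \in filter (finternal e sigma) sigma by rewrite mem_filter ui allin.
  rewrite in_take //.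
  apply: leq_ltn_trans (index_ltn Sz).
  move: zf; rewrite mem_filter => /andP[zi _].
  exact: filter_index_mono.
have HR : pairwise (R sigma S) rho.
  rewrite Er pairwise_cat.
  move: rho_uniq; rewrite Er cat_uniq => /and3P[_ /hasPn Hdis _].
  apply/and3P; split.
  - apply/allrelP => a b _ br; rewrite /R; apply/implyP => bS.
    by have := Hdis b br; rewrite bS.
  - have : pairwise (fun a b => pos sigma a < pos sigma b) S.
      rewrite /S /first_internal.
      have H := pairwise_filter (finternal e sigma) (pairwise_index us).
      move: H; rewrite -{1}(cat_take_drop k (filter _ _)) pairwise_cat => /and3P[_ H _].
      exact: H.
    by apply: sub_pairwise => a b /= H; rewrite /R H implybT.
  - apply/(pairwiseP v) => i j hi hj hij; rewrite /R; apply/implyP => jS.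
    by have := Hdis _ (mem_nth v hj); rewrite jS.
case: Htau => x' [rest [Erho Hrun_tau]].
have Ex : x' = x0.
  move: Erho Hv; rewrite Er /S /first_internal.
  case: (sigma) hs => [|c t] //= [->].
  have -> : finternal e (x0 :: t) x0 by rewrite /finternal /Defs.froot /= eqxx.
  by case: (k) => [|k'] //= [].
subst x'.
apply: (sim e_sym hs allin Mono_s (fun b => Hb b (allin b)) K rho_all HR rho_uniq Hrun_tau (Ginv_init e x0) (p := 0)) => //.
split => //.
- move=> n; rewrite /U inE; case: (fparent e sigma n) => [u|]; last by rewrite orbF.
  by rewrite ltn0 orbF.
Qed.
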